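(* Let $p,q,p',q'$ be idempotents in a unital ring $A$ with $p'\sim p$ and $q'\sim q$. Then $\operatorname{sr}(pAq)=1$ if and only if $\operatorname{sr}(p'Aq')=1$.
   Context: For idempotents $p,q$ in a unital ring $A$, $\operatorname{sr}(pAq)=1$ means: whenever $a\in pAq$, $x\in qAp$, $b\in pAp$ satisfy $ax+b=p$, there exist $y\in pAq$, $z\in qAp$ with $(a+by)z=p$. Idempotents $p,q$ are equivalent, $p\sim q$, if there exist $a\in pAq$, $b\in qAp$ with $ab=p$ and $ba=q$. *)

(* Defs.v *)
From mathcomp Require Import all_boot all_algebra.
Set Implicit Arguments. Unset Strict Implicit. Unset Printing Implicit Defensive.
Import GRing.Theory.
Local Open Scope ring_scope.

Definition idem (A : pzRingType) (e : A) : Prop := e * e = e.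

(* Membership in the corner pAq, for idempotents p q: a \in pAq <-> p a q = a. *)
Definition corner (A : pzRingType) (p q a : A) : Prop := p * a * q = a.

Definition sr1 (A : pzRingType) (p q : A) : Prop :=
  forall a x b : A, corner p q a -> corner q p x -> corner p p b ->
    a * x + b = p ->
    exists y z : A, corner p q y /\ corner q p z /\ (a + b * y) * z = p.

Definition idem_equiv (A : pzRingType) (p q : A) : Prop :=
  exists a b : A, corner p q a /\ corner q p b /\ a * b = p /\ b * a = q.

(* Main.v *)
Require Import Defs.
From mathcomp Require Import all_boot all_algebra.
Import GRing.Theory.
Local Open Scope ring_scope.

Lemma cornl (A : pzRingType) (p q a : A) : idem p -> corner p q a -> p * a = a.
Proof. move=> Hp Ha; rewrite -{1}Ha !mulrA Hp; exact: Ha. Qed.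
Lemma cornr (A : pzRingType) (p q a : A) : idem q -> corner p q a -> a * q = a.
Proof. move=> Hq Ha; rewrite -{1}Ha -!mulrA Hq mulrA; exact: Ha. Qed.

Lemma dir (A : pzRingType) (p q p' q' : A) :
  idem p -> idem q -> idem p' -> idem q' ->
  idem_equiv p' p -> idem_equiv q' q -> sr1 p q -> sr1 p' q'.
Proof.
move=> Hp Hq Hp' Hq' [u [v [Hu [Hv [uv vu]]]]] [s [t [Hs [Ht [st ts]]]]] H.
move=> a' x' b' Ha' Hx' Hb' E.
have ul := cornl _ _ _ _ Hp' Hu; have ur := cornr _ _ _ _ Hp Hu.
have vl := cornl _ _ _ _ Hp Hv; have vr := cornr _ _ _ _ Hp' Hv.
have sl := cornl _ _ _ _ Hq' Hs; have sr := cornr _ _ _ _ Hq Hs.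
have tl := cornl _ _ _ _ Hq Ht; have tr := cornr _ _ _ _ Hq' Ht.
have al := cornl _ _ _ _ Hp' Ha'; have ar := cornr _ _ _ _ Hq' Ha'.
have xl := cornl _ _ _ _ Hq' Hx'; have xr := cornr _ _ _ _ Hp' Hx'.
have bl := cornl _ _ _ _ Hp' Hb'; have br := cornr _ _ _ _ Hp' Hb'.
have [y [z [Hy [Hz Eyz]]]] : exists y z : A, corner p q y /\ corner q p z /\
   ((v*a'*s) + (v*b'*u) * y) * z = p.
  apply: (H _ (t*x'*u)).
  - by rewrite /corner !mulrA vl -mulrA sr.
  - by rewrite /corner !mulrA tl -!mulrA ur.
  - by rewrite /corner !mulrA vl -mulrA ur.
  - have -> : v * a' * s * (t * x' * u) = v * (a' * x') * u.
      by rewrite !mulrA -(mulrA _ s t) st -(mulrA _ a' q') ar.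
    by rewrite -mulrDl -mulrDr E vr.
have yl := cornl _ _ _ _ Hp Hy; have yr := cornr _ _ _ _ Hq Hy.
exists (u*y*t), (s*z*v); split; [|split].
- by rewrite /corner !mulrA ul -mulrA tr.
- by rewrite /corner !mulrA sl -mulrA vr.
- have -> : (a' + b' * (u * y * t)) * (s * z * v) = u * (((v*a'*s) + (v*b'*u) * y) * z) * v.
    by rewrite !mulrDl !mulrDr !mulrA -(mulrA u v) uv -(mulrA _ t s) ts -(mulrA _ y q) yr !mulrA uv al bl !mulrDl.
  by rewrite Eyz ur uv.
Qed.

Lemma equiv_sym (A : pzRingType) (p q : A) : idem_equiv p q -> idem_equiv q p.
Proof. by move=> [a [b [? [? [? ?]]]]]; exists b, a. Qed.

Theorem lemma2 (A : pzRingType) (p q p' q' : A) :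
  idem p -> idem q -> idem p' -> idem q' ->
  idem_equiv p' p -> idem_equiv q' q ->
  (sr1 p q <-> sr1 p' q').
Proof.
move=> Hp Hq Hp' Hq' E1 E2; split; first exact: dir.
by apply: dir => //; apply: equiv_sym.
Qed.
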